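(* For each $n\ge 4$, there exist connected graphs $G_1,G_2,G_3$, each of order $n$, such that $O_{\rm SR}(G_1)=\mathcal{M}$, $O_{\rm SR}(G_2)=\mathcal{N}$ and $O_{\rm SR}(G_3)=\mathcal{B}$.
   Context: All graphs are finite, simple and undirected. A set $S\subseteq V(G)$ is a strong resolving set of a connected graph $G$ if for all distinct $x,y\in V(G)$ there exists $z\in S$ such that $x$ lies on a $y$–$z$ geodesic or $y$ lies on an $x$–$z$ geodesic. The Maker–Breaker strong resolving game on $G$: Maker and Breaker alternately select a not-yet-chosen vertex of $G$; Maker wins if the vertices he selects contain a strong resolving set of $G$, Breaker wins otherwise. In the M-game Maker moves first, in the B-game Breaker moves first. $O_{\rm SR}(G)=\mathcal{M}$ if Maker has a winning strategy in both games, $\mathcal{B}$ if Breaker has a winning strategy in both, and $\mathcal{N}$ if the first player has a winning strategy in each. *)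

(* Defs.v *)
From mathcomp Require Import all_boot.
Set Implicit Arguments. Unset Strict Implicit. Unset Printing Implicit Defensive.

Section Graphs.
Variable T : finType.
Variable e : rel T.

Definition simple_graph : Prop := symmetric e /\ irreflexive e.

Definition connected_graph : Prop := forall x y : T, connect e x y.

Definition walk_of_length (k : nat) (x y : T) : bool :=
  [exists t : k.-tuple T, path e x t && (last x t == y)].

(* graph distance: least k (< #|T|) admitting a walk of length k;
   correct for connected graphs (shortest paths have fewer than #|T| edges) *)
Definition dist (x y : T) : nat :=
  find (fun k => walk_of_length k x y) (iota 0 #|T|).

Definition on_geodesic (y z x : T) : bool := dist y x + dist x z == dist y z.

Definition strong_resolving (S : {set T}) : bool :=
  [forall x, forall y, (x != y) ==>
     [exists z in S, on_geodesic y z x || on_geodesic x z y]].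

Definition maker_set_wins (M : {set T}) : bool :=
  [exists S : {set T}, (S \subset M) && strong_resolving S].

(* Maker--Breaker game value: M = Maker's vertices, B = Breaker's vertices,
   mturn = true iff it is Maker's turn. Play continues until all vertices are
   chosen; k is fuel (#|T| suffices). *)
Fixpoint maker_wins (k : nat) (M B : {set T}) (mturn : bool) : bool :=
  match k with
  | 0 => maker_set_wins M
  | k'.+1 =>
    let F := ~: (M :|: B) in
    if F == set0 then maker_set_wins M
    else if mturn then [exists v in F, maker_wins k' (v |: M) B false]
    else [forall v in F, maker_wins k' M (v |: B) true]
  end.

(* M-game: Maker starts; B-game: Breaker starts *)
Definition maker_wins_Mgame : bool := maker_wins #|T| set0 set0 true.
Definition maker_wins_Bgame : bool := maker_wins #|T| set0 set0 false.

End Graphs.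

Inductive outcome := OutM | OutN | OutB | OutP.

Definition O_SR (T : finType) (e : rel T) : outcome :=
  match maker_wins_Mgame e, maker_wins_Bgame e with
  | true, true => OutM
  | false, false => OutB
  | true, false => OutN
  | false, true => OutP
  end.

(* Main.v *)
Require Import Defs.
From mathcomp Require Import all_boot zify.
Set Implicit Arguments. Unset Strict Implicit. Unset Printing Implicit Defensive.

Section Gen.
Variable T : finType.
Variable e : rel T.
Local Notation walk := (walk_of_length e).

Lemma walk0 x y : walk 0 x y = (x == y).
Proof.
apply/existsP/eqP => [[t /andP[_ /eqP <-]]|<-].
  by case: t => -[|a s] hs.
by exists [tuple]; rewrite /= eqxx.
Qed.

Lemma walkS k x y : walk k.+1 x y = [exists z, e x z && walk k z y].
Proof.
apply/existsP/existsP => [[t]|[z /andP[exz /existsP[t /andP[pt lt]]]]].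
  case/tupleP: t => z t /= /andP[/andP[exz pt] lt].
  by exists z; rewrite exz; apply/existsP; exists t; rewrite pt.
by exists [tuple of z :: t]; rewrite /= exz pt.
Qed.

Lemma walk1 x y : walk 1 x y = e x y.
Proof.
rewrite walkS; apply/existsP/idP => [[z /andP[h]]|h].
  by rewrite walk0 => /eqP <-.
by exists y; rewrite h walk0 eqxx.
Qed.

Lemma walk_cat a b x y z : walk a x y -> walk b y z -> walk (a + b) x z.
Proof.
elim: a x => [|a IH] x.
  by rewrite walk0 => /eqP ->.
rewrite walkS => /existsP[w /andP[hxw hw]] hb.
rewrite addSn walkS; apply/existsP; exists w; rewrite hxw /=.
exact: IH hw hb.
Qed.

Lemma walk_sym (se : symmetric e) k x y : walk k x y -> walk k y x.
Proof.
elim: k x y => [|k IH] x y.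
  by rewrite !walk0 eq_sym.
rewrite walkS => /existsP[z /andP[hxz hz]].
rewrite -addn1; apply: walk_cat (IH _ _ hz) _.
by rewrite walk1 se.
Qed.

Lemma walk_connect k x y : walk k x y -> connect e x y.
Proof.
elim: k x => [|k IH] x.
  by rewrite walk0 => /eqP ->.
rewrite walkS => /existsP[z /andP[hxz hz]].
exact: connect_trans (connect1 hxz) (IH _ hz).
Qed.

Lemma walk_lb (f : T -> nat) :
  (forall u v, e u v -> f u <= (f v).+1 /\ f v <= (f u).+1) ->
  forall k x y, walk k x y -> f x <= f y + k /\ f y <= f x + k.
Proof.
move=> H; elim=> [|k IH] x y.
  by rewrite walk0 => /eqP ->; lia.
rewrite walkS => /existsP[z /andP[hxz hz]].
have := H _ _ hxz; have := IH _ _ hz; lia.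
Qed.

Lemma dist_eq x y d : walk d x y -> (forall k, k < d -> ~~ walk k x y) ->
  d < #|T| -> dist e x y = d.
Proof.
move=> hw hk hd; rewrite /dist.
have -> : iota 0 #|T| = iota 0 d ++ iota d (#|T| - d).
  by rewrite -iotaD subnKC // ltnW.
rewrite find_cat.
have -> : has (fun k => walk k x y) (iota 0 d) = false.
  apply/negbTE/hasPn => k; rewrite mem_iota add0n => /andP[_ h]; exact: hk.
rewrite size_iota.
case E: (#|T| - d) => [|m]; first by lia.
by rewrite /= hw addn0.
Qed.

Lemma dist_refl x : dist e x x = 0.
Proof.
apply: dist_eq => //; first by rewrite walk0.
by apply/card_gt0P; exists x.
Qed.

Lemma msw_mono (M M' : {set T}) : M \subset M' -> maker_set_wins e M -> maker_set_wins e M'.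
Proof.
move=> h /existsP[S /andP[h1 h2]]; apply/existsP; exists S.
by rewrite h2 (subset_trans h1 h).
Qed.

Lemma L1 k (M B : {set T}) t : maker_set_wins e M -> maker_wins e k M B t.
Proof.
elim: k M B t => [|k IH] M B t h //=.
case: ifP => // hF; case: t.
  have /set0Pn [v hv] := negbT hF.
  apply/existsP; exists v; rewrite hv /=; apply: IH.
  by apply: msw_mono h; exact: subsetUr.
by apply/forallP => v; apply/implyP => _; exact: IH.
Qed.

Definition bad x y := forall S : {set T}, x \notin S -> y \notin S ->
  ~~ strong_resolving e S.

Lemma msw_false (M : {set T}) x y : bad x y -> x \notin M -> y \notin M ->
  ~~ maker_set_wins e M.
Proof.
move=> hb xM yM; apply/existsP => -[S /andP[sub sr]].
have xS : x \notin S by apply: contra xM; exact: (subsetP sub).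
have yS : y \notin S by apply: contra yM; exact: (subsetP sub).
by move: (hb S xS yS); rewrite sr.
Qed.

Lemma L2 k (M B : {set T}) t x y : bad x y -> x \in B -> y \in B -> x \notin M ->
  y \notin M -> ~~ maker_wins e k M B t.
Proof.
elim: k M B t => [|k IH] M B t hb xB yB xM yM.
  exact: msw_false hb xM yM.
rewrite /=; case: ifP => hF; first exact: msw_false hb xM yM.
case: t.
  apply/existsP => -[v /andP[hv hw]]; move: hw; apply/negP.
  move: hv; rewrite !inE negb_or => /andP[vM vB].
  have xv : x != v by apply: contraNneq vB => <-.
  have yv : y != v by apply: contraNneq vB => <-.
  by apply: IH => //; rewrite !inE negb_or ?xv ?yv.
have /set0Pn [v hv] := negbT hF.
rewrite negb_forall; apply/existsP; exists v; rewrite hv /=.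
by apply: IH => //; rewrite !inE ?xB ?yB orbT.
Qed.

Lemma bad_of x y : x != y ->
  (forall z, z != x -> z != y -> ~~ on_geodesic e y z x && ~~ on_geodesic e x z y) ->
  bad x y.
Proof.
move=> xy H S xS yS; apply/negP => /forallP /(_ x) /forallP /(_ y).
rewrite xy /= => /existsP [z /andP [zS]].
have zx : z != x by apply: contraNneq xS => <-.
have zy : z != y by apply: contraNneq yS => <-.
by case/andP: (H z zx zy) => /negbTE -> /negbTE ->.
Qed.

Lemma mwM k (M B : {set T}) : 0 < k -> ~:(M :|: B) != set0 ->
  maker_wins e k M B true =
  [exists v in ~:(M :|: B), maker_wins e k.-1 (v |: M) B false].
Proof. by case: k => // k _ /= /negbTE ->. Qed.

Lemma mwB k (M B : {set T}) : 0 < k -> ~:(M :|: B) != set0 ->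
  maker_wins e k M B false =
  [forall v in ~:(M :|: B), maker_wins e k.-1 M (v |: B) true].
Proof. by case: k => // k _ /= /negbTE ->. Qed.

Lemma F_ne (M B : {set T}) : #|M| + #|B| < #|T| -> ~:(M :|: B) != set0.
Proof.
move=> h; rewrite -card_gt0.
have := cardsC (M :|: B); have := (leq_card_setU M B).1; lia.
Qed.

Lemma cardU1le v (A : {set T}) : #|v |: A| <= #|A|.+1.
Proof. by rewrite cardsU1; case: (v \in A). Qed.

End Gen.
Definition kE n : rel 'I_n := fun i j => i != j.
Arguments kE : clear implicits.

Lemma kdist n (x y : 'I_n) : x != y -> dist (kE n) x y = 1.
Proof.
move=> xy; apply: dist_eq; first by rewrite walk1.
  by case=> // _; rewrite walk0.
have hxy : (x : nat) <> y by move=> /val_inj /eqP; rewrite (negbTE xy).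
rewrite card_ord; have := ltn_ord x; have := ltn_ord y; lia.
Qed.

Lemma kbad n (x y : 'I_n) : x != y -> bad (kE n) x y.
Proof.
move=> xy; apply: bad_of => // z zx zy.
by rewrite /on_geodesic !kdist // 1?eq_sym.
Qed.

Lemma K_out n : 4 <= n -> simple_graph (kE n) /\ connected_graph (kE n) /\ O_SR (kE n) = OutB.
Proof.
move=> hn; split; [split|split].
- by move=> x y; rewrite /kE eq_sym.
- by move=> x; rewrite /kE eqxx.
- move=> x y; case: (eqVneq x y) => [->|xy]; first exact: connect0.
  by apply: connect1.
have cT : #|'I_n| = n by rewrite card_ord.
rewrite /O_SR /maker_wins_Mgame /maker_wins_Bgame.
have -> : maker_wins (kE n) #|'I_n| set0 set0 true = false.
  rewrite cT mwM ?F_ne ?cards0 ?cT; try lia.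
  apply/negbTE/existsP => -[v /andP[hv H]]; move: H; apply/negP.
  have ne1 : ~: ((v |: set0) :|: set0) != set0.
    by apply: F_ne; rewrite ?setU0 cards0 cT cards1; lia.
  idtac. rewrite mwB // ; last by lia.
  have /set0Pn [w hw] := ne1.
  rewrite negb_forall; apply/existsP; exists w; rewrite hw /=.
  have ne2 : ~: ((v |: set0) :|: (w |: set0)) != set0.
    by apply: F_ne; rewrite ?setU0 cT !cards1; lia.
  rewrite mwM //; last by lia.
  apply/existsP => -[u /andP[hu H]]; move: H; apply/negP.
  have ne3 : ~: ((u |: (v |: set0)) :|: (w |: set0)) != set0.
    apply: F_ne; rewrite ?setU0 cT cards1; have := cardU1le u [set v]; rewrite cards1; lia.
  rewrite mwB //; last by lia.
  have /set0Pn [x hx] := ne3.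
  rewrite negb_forall; apply/existsP; exists x; rewrite hx /=.
  apply: (@L2 _ _ _ _ _ _ x w); rewrite ?inE ?eqxx ?orbT //; try apply: kbad;
    move: hw hu hx; rewrite !inE -!val_eqE /=; lia.
have -> : maker_wins (kE n) #|'I_n| set0 set0 false = false.
  rewrite cT mwB ?F_ne ?cards0 ?cT; try lia.
  have /set0Pn [w hw] : ~: ((set0 : {set 'I_n}) :|: set0) != set0.
    by apply: F_ne; rewrite ?setU0 cards0 cT; lia.
  apply/negbTE; rewrite negb_forall; apply/existsP; exists w; rewrite hw /=.
  have ne2 : ~: ((set0 :|: (w |: set0))) != set0.
    by apply: F_ne; rewrite ?setU0 cT cards0 cards1; lia.
  rewrite mwM //; last by lia.
  apply/existsP => -[u /andP[hu H]]; move: H; apply/negP.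
  have ne3 : ~: ((u |: set0) :|: (w |: set0)) != set0.
    by apply: F_ne; rewrite ?setU0 cT !cards1; lia.
  rewrite mwB //; last by lia.
  have /set0Pn [x hx] := ne3.
  rewrite negb_forall; apply/existsP; exists x; rewrite hx /=.
  apply: (@L2 _ _ _ _ _ _ x w); rewrite ?inE ?eqxx ?orbT //; try apply: kbad;
    move: hw hu hx; rewrite !inE -!val_eqE /=; lia.
by [].
Qed.
Lemma walk_line n (e : rel 'I_n) N :
  (forall i j : 'I_n, (j : nat) = i.+1 -> j <= N -> e i j) ->
  forall d (i j : 'I_n), (j : nat) = i + d -> j <= N -> walk_of_length e d i j.
Proof.
move=> H; elim=> [|d IH] i j hij hN.
  by rewrite walk0; apply/eqP/val_inj; rewrite /= hij addn0.
have hi1 : i.+1 < n by have := ltn_ord j; lia.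
rewrite walkS; apply/existsP; exists (Ordinal hi1); apply/andP; split.
  by apply: H => /=; lia.
by apply: IH => /=; lia.
Qed.

Definition pE n : rel 'I_n := fun i j => (i.+1 == j :> nat) || (j.+1 == i :> nat).
Arguments pE : clear implicits.

Lemma pE_sym n : symmetric (pE n).
Proof. by move=> x y; rewrite /pE orbC. Qed.

Lemma pwalk n (x y : 'I_n) : walk_of_length (pE n) ((x - y) + (y - x)) x y.
Proof.
case: (leqP x y) => h.
  have -> : (x - y) + (y - x) = y - x by lia.
  apply: (@walk_line _ _ n.-1) => //; last by have := ltn_ord y; lia.
    by move=> i j hj _; rewrite /pE hj eqxx.
  by lia.
apply: walk_sym; first exact: pE_sym.
have -> : (x - y) + (y - x) = x - y by lia.
apply: (@walk_line _ _ n.-1) => //; last by have := ltn_ord x; lia.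
  by move=> i j hj _; rewrite /pE hj eqxx.
by lia.
Qed.

Lemma pdist n (x y : 'I_n) : dist (pE n) x y = (x - y) + (y - x).
Proof.
apply: dist_eq; first exact: pwalk.
  move=> k hk; apply/negP => /(walk_lb (f := fun u : 'I_n => (u : nat))) H.
  have : x <= y + k /\ y <= x + k.
    by apply: H => u v; rewrite /pE => /orP[] /eqP; lia.
  lia.
rewrite card_ord; have := ltn_ord x; have := ltn_ord y; lia.
Qed.

Lemma pres n (z : 'I_n) : (z : nat) = 0 \/ (z : nat) = n.-1 -> strong_resolving (pE n) [set z].
Proof.
move=> hz; apply/forallP => x; apply/forallP => y; apply/implyP => hxy.
apply/existsP; exists z; rewrite in_set1 eqxx /= /on_geodesic !pdist.
have hv : (x : nat) <> y by move=> /val_inj /eqP; rewrite (negbTE hxy).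
have := ltn_ord x; have := ltn_ord y; have := ltn_ord z.
move=> *; apply/orP; case: hz => hz; case: (ltngtP x y) => h;
  by (left; apply/eqP; lia) || (right; apply/eqP; lia) || lia.
Qed.

Lemma P_out n : 4 <= n -> simple_graph (pE n) /\ connected_graph (pE n) /\ O_SR (pE n) = OutM.
Proof.
move=> hn; split; [split|split].
- exact: pE_sym.
- by move=> x; rewrite /pE; apply/negP => /orP[] /eqP; lia.
- move=> x y; exact: walk_connect (pwalk x y).
have cT : #|'I_n| = n by rewrite card_ord.
have h0 : 0 < n by lia.
have hm : n.-1 < n by lia.
have msw : forall (z : 'I_n) (M : {set 'I_n}), (z : nat) = 0 \/ (z : nat) = n.-1 -> z \in M ->
    maker_set_wins (pE n) M.
  move=> z M hz zM; apply/existsP; exists [set z]; rewrite sub1set zM /=.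
  exact: pres.
rewrite /O_SR /maker_wins_Mgame /maker_wins_Bgame.
have -> : maker_wins (pE n) #|'I_n| set0 set0 true = true.
  rewrite cT mwM ?F_ne ?cards0 ?cT; try lia.
  apply/existsP; exists (Ordinal h0); rewrite !inE /=.
  apply: L1; apply: (msw (Ordinal h0)); first by left.
  by rewrite !inE eqxx.
have -> : maker_wins (pE n) #|'I_n| set0 set0 false = true.
  rewrite cT mwB ?F_ne ?cards0 ?cT; try lia.
  apply/forallP => v; apply/implyP => _.
  rewrite mwM; last 2 first.
  - by lia.
  - by apply: F_ne; rewrite ?setU0 cards0 cards1 cT; lia.
  apply/existsP.
  case: (eqVneq (v : nat) 0) => hv.
    exists (Ordinal hm); rewrite !inE -!val_eqE /= hv.
    apply/andP; split; first by lia.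
    apply: L1; apply: (msw (Ordinal hm)); first by right.
    by rewrite !inE eqxx.
  exists (Ordinal h0); rewrite !inE -!val_eqE /=; apply/andP; split; first by lia.
  apply: L1; apply: (msw (Ordinal h0)); first by left.
  by rewrite !inE eqxx.
by [].
Qed.
Definition bE n : rel 'I_n := fun i j =>
  [|| (i.+1 == j :> nat) && (j <= n - 2), (j.+1 == i :> nat) && (i <= n - 2),
      (i == n - 3 :> nat) && (j == n - 1 :> nat) |
      (j == n - 3 :> nat) && (i == n - 1 :> nat)].
Arguments bE : clear implicits.

Definition pos n (i : 'I_n) := minn i (n - 2).

Lemma bE_sym n : symmetric (bE n).
Proof. move=> x y; rewrite /bE; apply/idP/idP; lia. Qed.

Section Broom.
Variable n : nat.
Hypothesis hn : 4 <= n.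

Lemma b3 : n - 3 < n. Proof. lia. Qed.

Lemma bwalk2 (x y : 'I_n) : (x + y = 2 * n - 3)%N -> walk_of_length (bE n) 2 x y.
Proof.
move=> h; rewrite walkS; apply/existsP; exists (Ordinal b3); rewrite walk1.
have := ltn_ord x; have := ltn_ord y; rewrite /bE /=; lia.
Qed.

Lemma bwalk (x y : 'I_n) : (x + y <> 2 * n - 3)%N ->
  walk_of_length (bE n) ((pos x - pos y) + (pos y - pos x)) x y.
Proof.
wlog h : x y / x <= y.
  move=> H; case: (leqP x y) => hxy; first exact: H.
  move=> hs; apply: walk_sym; first exact: bE_sym.
  rewrite addnC; apply: H; lia.
move=> hs; rewrite /pos.
have hx := ltn_ord x; have hy := ltn_ord y.
have [hy2|hy2] : y <= n - 2 \/ n - 2 < y by lia.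
  have -> : (minn x (n - 2) - minn y (n - 2)) + (minn y (n - 2) - minn x (n - 2)) = y - x by lia.
  apply: (@walk_line _ _ (n - 2)) => //; last by lia.
  by move=> i j hj hj2; rewrite /bE; lia.
case: (eqVneq (x : nat) (n - 1)) => hx1.
  have -> : x = y by apply: val_inj; rewrite /=; lia.
  by rewrite !subnn walk0.
have -> : (minn x (n - 2) - minn y (n - 2)) + (minn y (n - 2) - minn x (n - 2)) = (n - 3 - x) + 1 by lia.
apply: (@walk_cat _ _ _ _ _ (Ordinal b3)).
  apply: (@walk_line _ _ (n - 2)) => /=; try lia.
  by move=> i j hj hj2; rewrite /bE; lia.
rewrite walk1 /bE /=; lia.
Qed.

Lemma bdist (x y : 'I_n) :
  (dist (bE n) x y = 2 /\ (x + y = 2 * n - 3)%N) \/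
  (dist (bE n) x y = (pos x - pos y) + (pos y - pos x) /\ (x + y <> 2 * n - 3)%N).
Proof.
have hx := ltn_ord x; have hy := ltn_ord y.
case: (eqVneq (x + y) (2 * n - 3)) => h.
  left; split => //; apply: dist_eq; first exact: bwalk2.
    case=> [|[|]] // _; first by rewrite walk0 -val_eqE /=; lia.
    by rewrite walk1 /bE; lia.
  by rewrite card_ord; lia.
right; split; last by apply/eqP.
apply: dist_eq; first by apply: bwalk; apply/eqP.
  move=> k hk; apply/negP => /(walk_lb (f := @pos n)) H.
  have : pos x <= pos y + k /\ pos y <= pos x + k.
    by apply: H => u v; rewrite /bE /pos; lia.
  lia.
rewrite card_ord /pos; lia.
Qed.

Lemma bconn : connected_graph (bE n).
Proof.
move=> x y; case: (eqVneq (x + y) (2 * n - 3)) => h.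
  exact: walk_connect (bwalk2 h).
by apply: walk_connect (bwalk (elimN eqP h)).
Qed.

Lemma pos_cases (x : 'I_n) : (x <= n - 2 /\ pos x = x) \/ (n - 2 < x /\ pos x = n - 2).
Proof. rewrite /pos; lia. Qed.

Lemma bres (S : {set 'I_n}) (z0 b : 'I_n) : (z0 : nat) = 0 -> n - 2 <= b ->
  z0 \in S -> b \in S -> strong_resolving (bE n) S.
Proof.
move=> hz0 hb z0S bS.
apply/forallP => x; apply/forallP => y; apply/implyP => hxy.
have hv : (x : nat) <> y by move=> /val_inj /eqP; rewrite (negbTE hxy).
case xS: (x \in S).
  by apply/existsP; exists x; rewrite xS /on_geodesic dist_refl addn0 eqxx.
case yS: (y \in S).
  by apply/existsP; exists y; rewrite yS /on_geodesic dist_refl addn0 eqxx orbT.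
apply/existsP; exists z0; rewrite z0S /= /on_geodesic.
have xz : (x : nat) <> z0 by move=> /val_inj h; rewrite h z0S in xS.
have yz : (y : nat) <> z0 by move=> /val_inj h; rewrite h z0S in yS.
have xb : (x : nat) <> b by move=> /val_inj h; rewrite h bS in xS.
have yb : (y : nat) <> b by move=> /val_inj h; rewrite h bS in yS.
have := ltn_ord x; have := ltn_ord y; have := ltn_ord b => hbn hyn hxn.
have [[_ c]|[d1 _]] := bdist x z0; first lia.
have [[_ c]|[d2 _]] := bdist y z0; first lia.
have [[_ c]|[d3 nl]] := bdist x y; first lia.
have [[_ c]|[d4 _]] := bdist y x; first by clear -c nl; lia.
rewrite d1 d2 d3 d4; apply/orP.
have pz0 : pos z0 = 0 by rewrite /pos hz0 min0n.
have [lt|lt] : pos x < pos y \/ pos y < pos x.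
  have := pos_cases x; have := pos_cases y; clear -hv nl hxn hyn; lia.
  by left; apply/eqP; clear -lt pz0; lia.
by right; apply/eqP; clear -lt pz0; lia.
Qed.

Lemma bbad (z0 b : 'I_n) : (z0 : nat) = 0 -> n - 2 <= b -> bad (bE n) z0 b.
Proof.
move=> hz0 hb; have hbn := ltn_ord b.
apply: bad_of; first by rewrite -val_eqE /=; lia.
move=> z; rewrite -!val_eqE /= => zx zy.
have hzn := ltn_ord z.
have [[_ c]|[d1 _]] := bdist b z0; first lia.
have [[_ c]|[d2 _]] := bdist z0 z; first lia.
have [[_ c]|[d3 _]] := bdist z0 b; first lia.
rewrite /on_geodesic d1 d2 d3.
have pz0 : pos z0 = 0 by rewrite /pos hz0 min0n.
have pb : pos b = n - 2 by rewrite /pos; lia.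
have pz : 1 <= pos z <= n - 2.
  have := pos_cases z; clear -zx hz0 hn; lia.
have [[d4 c]|[d4 c]] := bdist b z; rewrite d4.
  by apply/andP; split; apply/negP => /eqP; clear -pz0 pb pz hn; lia.
have pz' : pos z < n - 2.
  have := pos_cases z; clear -zy c hb hbn hn hzn; lia.
by apply/andP; split; apply/negP => /eqP; clear -pz0 pb pz pz' hn; lia.
Qed.

Lemma B_out : simple_graph (bE n) /\ connected_graph (bE n) /\ O_SR (bE n) = OutN.
Proof.
split; [split|split].
- exact: bE_sym.
- by move=> x; rewrite /bE; lia.
- exact: bconn.
have cT : #|'I_n| = n by rewrite card_ord.
have h0 : 0 < n by lia.
have h2 : n - 2 < n by lia.
have h1 : n - 1 < n by lia.
rewrite /O_SR /maker_wins_Mgame /maker_wins_Bgame.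
have -> : maker_wins (bE n) #|'I_n| set0 set0 true = true.
  rewrite cT mwM ?F_ne ?cards0 ?cT; try lia.
  apply/existsP; exists (Ordinal h0); rewrite !inE /=.
  rewrite mwB; last 2 first.
  - by lia.
  - by apply: F_ne; rewrite ?setU0 cards0 cards1 cT; lia.
  apply/forallP => v; apply/implyP; rewrite !inE -!val_eqE /= => hv.
  rewrite mwM; last 2 first.
  - by lia.
  - by apply: F_ne; rewrite ?setU0 !cards1 cT; lia.
  apply/existsP.
  case: (eqVneq (v : nat) (n - 2)) => hv2.
    exists (Ordinal h1); rewrite !inE -!val_eqE /=.
    apply/andP; split; first by lia.
    apply: L1; apply/existsP; eexists; apply/andP; split; first exact: subxx.
    apply: (@bres _ (Ordinal h0) (Ordinal h1)) => //=; first by lia.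
      by rewrite !inE eqxx orbT.
    by rewrite !inE eqxx.
  exists (Ordinal h2); rewrite !inE -!val_eqE /=.
  apply/andP; split; first by lia.
  apply: L1; apply/existsP; eexists; apply/andP; split; first exact: subxx.
  apply: (@bres _ (Ordinal h0) (Ordinal h2)) => //=.
    by rewrite !inE eqxx orbT.
  by rewrite !inE eqxx.
have -> : maker_wins (bE n) #|'I_n| set0 set0 false = false.
  rewrite cT mwB ?F_ne ?cards0 ?cT; try lia.
  apply/negbTE; rewrite negb_forall; apply/existsP; exists (Ordinal h0).
  rewrite !inE /=.
  rewrite mwM; last 2 first.
  - by lia.
  - by apply: F_ne; rewrite ?set0U ?setU0 cards0 cards1 cT; lia.
  apply/existsP => -[u /andP[hu H]]; move: H; apply/negP.
  move: hu; rewrite !inE -!val_eqE /= => hu.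
  rewrite mwB; last 2 first.
  - by lia.
  - by apply: F_ne; rewrite ?setU0 !cards1 cT; lia.
  rewrite negb_forall; apply/existsP.
  case: (eqVneq (u : nat) (n - 2)) => hu2.
    exists (Ordinal h1); rewrite !inE -!val_eqE /=.
    rewrite negb_imply; apply/andP; split; first by lia.
    apply: (@L2 _ _ _ _ _ _ (Ordinal h0) (Ordinal h1)).
    - by apply: bbad => //=; lia.
    - by rewrite !inE eqxx orbT.
    - by rewrite !inE eqxx.
    - by rewrite !inE -!val_eqE /=; lia.
    - by rewrite !inE -!val_eqE /=; lia.
  exists (Ordinal h2); rewrite !inE -!val_eqE /=.
  rewrite negb_imply; apply/andP; split; first by lia.
  apply: (@L2 _ _ _ _ _ _ (Ordinal h0) (Ordinal h2)).
  - by apply: bbad => //=; lia.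
  - by rewrite !inE eqxx orbT.
  - by rewrite !inE eqxx.
  - by rewrite !inE -!val_eqE /=; lia.
  - by rewrite !inE -!val_eqE /=; lia.
by [].
Qed.
End Broom.

Unset Implicit Arguments.

Theorem mainTheorem4 (n : nat) (hn : 4 <= n) :
  (exists e1 : rel 'I_n, simple_graph e1 /\ connected_graph e1 /\ O_SR e1 = OutM) /\
  (exists e2 : rel 'I_n, simple_graph e2 /\ connected_graph e2 /\ O_SR e2 = OutN) /\
  (exists e3 : rel 'I_n, simple_graph e3 /\ connected_graph e3 /\ O_SR e3 = OutB).
Proof.
split; first by exists (pE n); exact: P_out.
split; first by exists (bE n); exact: B_out.
by exists (kE n); exact: K_out.
Qed.
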